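(* Let $\mathfrak s=\mathfrak{sl}(2,\mathbb C)$ with $h,e$ and Cartan involution $\theta$ such that $[e,-\theta e]=h$, $\theta h=-h$. Put $y=e-\theta e$, $t=i(e+\theta e)$, $Z=h+iy$, $\overline Z=h-iy$, $\mathfrak a=\mathbb Ch$, $\mathfrak k=\mathbb Ct$, $\mathfrak n=\mathbb Ce$, and let $Q:U(\mathfrak s)=U(\mathfrak a)U(\mathfrak k)\oplus\mathfrak nU(\mathfrak s)\to U(\mathfrak a)U(\mathfrak k)$ be the projection onto the first summand, where $U(\mathfrak a)U(\mathfrak k)$ is identified with the polynomial algebra $\mathbb C[h,t]$ via $h^at^b\mapsto h^at^b$. Then for every integer $l\ge1$ (powers taken in $U(\mathfrak s)$) $$Q(Z^l)=\prod_{j=0}^{l-1}(h+2j-t),\qquad Q(\overline Z^{\,l})=\prod_{j=0}^{l-1}(h+2j+t).$$ *)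

(* Defs.v *)
From HB Require Import structures.
From mathcomp Require Import all_boot all_order all_algebra.
Set Implicit Arguments. Unset Strict Implicit. Unset Printing Implicit Defensive.
Import Order.TTheory GRing.Theory Num.Theory.
Local Open Scope ring_scope.

Definition comm_br (R : pzRingType) (x y : R) : R := x * y - y * x.

(* The polynomial algebra C[h,t], represented as {poly {poly C}}:
   the outer variable is t, coefficients are polynomials in h. *)
Definition hvar (C : nzRingType) : {poly {poly C}} := ('X)%:P.
Definition tvar (C : nzRingType) : {poly {poly C}} := 'X.

Definition ht_embed (C : comNzRingType) (A : algType C) (h t : A)
    (p : {poly {poly C}}) : A :=
  \sum_(b < size p) \sum_(a < size p`_b) (p`_b)`_a *: (h ^+ a * t ^+ b).

(* Main.v *)
Require Import Defs.
From HB Require Import structures.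
From mathcomp Require Import all_boot all_order all_algebra ring.
Import Order.TTheory GRing.Theory Num.Theory.
Local Open Scope ring_scope.

Section S.
Variables (C : comNzRingType) (A : algType C) (h t : A).

Definition psi (p : {poly {poly C}}) : A := (map_poly (horner_alg h) p).[t].

Lemma horner_algE (c : {poly C}) : horner_alg h c = \sum_(a < size c) c`_a *: h ^+ a.
Proof.
rewrite /horner_alg /horner_morph.
rewrite (@horner_coef_wide _ (size c)); last exact: size_poly.
by apply: eq_bigr => i _; rewrite coef_map /= mulr_algl.
Qed.

Lemma ht_embedE p : ht_embed h t p = psi p.
Proof.
rewrite /psi (@horner_coef_wide _ (size p)); last exact: size_poly.
apply: eq_bigr => b _; rewrite coef_map /= horner_algE big_distrl /=.
by apply: eq_bigr => a _; rewrite scalerAl.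
Qed.

Lemma psiD p q : psi (p + q) = psi p + psi q.
Proof. by rewrite /psi rmorphD hornerD. Qed.
Lemma psiMX p : psi (p * 'X) = psi p * t.
Proof. by rewrite /psi rmorphM /= map_polyX hornerMX. Qed.
Lemma psiCM c p : psi (c%:P * p) = horner_alg h c * psi p.
Proof. by rewrite /psi rmorphM /= map_polyC hornerCM. Qed.
Lemma psiC c : psi c%:P = horner_alg h c.
Proof. by rewrite /psi map_polyC hornerC. Qed.
Variables (e W : A) (s d k : C).
Hypothesis Hhe : exists w, h * e = e * w.
Hypothesis HW : W = h - s *: t + k *: e.
Hypothesis HtW : t * W = W * (t - d%:A).

Definition cong (X Y : A) := exists u, X - Y = e * u.

Lemma HeA c : exists u, horner_alg h c * e = e * u.
Proof.
case: Hhe => w Hw.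
elim/poly_ind: c => [|c a [u Hu]]; first by exists 0; rewrite rmorph0 !mul0r mulr0.
exists (u * w + a%:A).
rewrite rmorphD rmorphM /= horner_algX horner_algC mulrDl -mulrA Hw mulrA Hu.
by rewrite mulrDr -mulrA mulr_algl mulr_algr.
Qed.

Definition T (p : {poly {poly C}}) :=
  (hvar C - (s%:P)%:P * 'X) * (p \Po ('X - (d%:P)%:P)).

Lemma psi_hs : psi (hvar C - (s%:P)%:P * 'X) = h - s *: t.
Proof.
rewrite /psi rmorphB rmorphM /= map_polyX !map_polyC /= hornerD hornerN hornerCM hornerX hornerC.
by rewrite horner_algX horner_algC mulr_algl.
Qed.

Lemma psiB p q : psi (p - q) = psi p - psi q.
Proof. by rewrite /psi rmorphB hornerD hornerN. Qed.

Lemma psi_shift q : psi (q * ('X - (d%:P)%:P)) = psi q * (t - d%:A).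
Proof.
by rewrite mulrBr psiB psiMX mulrC psiCM horner_algC mulrBr mulr_algl mulr_algr.
Qed.

Lemma L p : cong (psi p * W) (psi (T p)).
Proof.
elim/poly_ind: p => [|p c [u Hu]].
  by exists 0; rewrite /T comp_polyC mulr0 /psi !rmorph0 horner0 mul0r subr0 mulr0.
have [v Hv] := HeA c.
exists (u * (t - d%:A) + k *: v).
rewrite /T comp_polyD comp_polyM comp_polyX comp_polyC mulrDr mulrA -/(T p).
rewrite psiD psiMX psiC mulrDl -mulrA HtW mulrA.
rewrite psiD psi_shift mulrC psiCM psi_hs.
have -> : psi p * W = psi (T p) + e * u by rewrite -Hu addrC subrK.
rewrite HW (mulrDr (horner_alg h c)) -scalerAr Hv.
set P1 := psi (T p). set P3 := horner_alg h c * _.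
rewrite mulrDl [RHS]mulrDr (mulrA e) scalerAr.
set Q1 := P1 * _. set Q2 := e * u * _. set Q3 := e * (k *: v).
by rewrite (addrACA Q1 Q2 P3 Q3) [LHS]addrC addKr.
Qed.

Hypothesis Hsd : s * d = 2.

Definition Pr (l : nat) : {poly {poly C}} :=
  \prod_(j < l) (hvar C + ((2 * j)%:R)%:P%:P - (s%:P)%:P * 'X).

Lemma TPr l : T (Pr l) = Pr l.+1.
Proof.
rewrite /T /Pr rmorph_prod big_ord_recl /=.
congr (_ * _); first by rewrite muln0 mulr0n !polyC0 addr0.
apply: eq_bigr => j _.
rewrite comp_polyB comp_polyD comp_polyM /hvar !comp_polyC comp_polyX.
have -> : ((2 * (bump 0 j))%:R)%:P%:P =
   ((2 * j)%:R)%:P%:P + (s%:P)%:P * (d%:P)%:P :> {poly {poly C}}.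
  by rewrite -!polyCM -!polyCD Hsd /bump add1n mulnS natrD addrC.
ring.
Qed.

Lemma powW l : cong (W ^+ l) (psi (Pr l)).
Proof.
elim: l => [|l [u Hu]].
  by exists 0; rewrite expr0 /Pr big_ord0 /psi rmorph1 hornerC subrr mulr0.
have [u' Hu'] := L (Pr l).
exists (u * W + u'); rewrite -TPr exprSr.
have -> : W ^+ l = psi (Pr l) + e * u by rewrite -Hu addrC subrK.
by rewrite mulrDr mulrA -Hu' mulrDl addrAC addrC.
Qed.
End S.

Section Lin.
Variables (C : numClosedFieldType) (V : lmodType C) (x y z : V).
Definition lin (a b c : C) := a *: x + b *: y + c *: z.
Lemma x_lin : x = lin 1 0 0. Proof. by rewrite /lin scale1r !scale0r !addr0. Qed.
Lemma y_lin : y = lin 0 1 0. Proof. by rewrite /lin scale1r !scale0r add0r addr0. Qed.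
Lemma z_lin : z = lin 0 0 1. Proof. by rewrite /lin scale1r !scale0r !add0r. Qed.
Lemma lin0 : 0 = lin 0 0 0. Proof. by rewrite /lin !scale0r !addr0. Qed.
Lemma linD a b c a' b' c' : lin a b c + lin a' b' c' = lin (a + a') (b + b') (c + c').
Proof.
rewrite /lin !scalerDl -!addrA; congr (_ + _).
rewrite (addrCA (c *: z)) (addrCA (b *: y)); congr (_ + _); congr (_ + _).
by rewrite addrCA.
Qed.
Lemma linN a b c : - lin a b c = lin (- a) (- b) (- c).
Proof. by rewrite /lin !opprD !scaleNr. Qed.
Lemma linZ k a b c : k *: lin a b c = lin (k * a) (k * b) (k * c).
Proof. by rewrite /lin !scalerDr !scalerA. Qed.
Lemma linMn n a b c : lin a b c *+ n = lin (a *+ n) (b *+ n) (c *+ n).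
Proof. by rewrite /lin !mulrnDl !scalerMnl. Qed.
Lemma linE a b c a' b' c' : a = a' -> b = b' -> c = c' -> lin a b c = lin a' b' c'.
Proof. by move=> -> -> ->. Qed.

Ltac linify := rewrite ?(x_lin, y_lin, z_lin, lin0); rewrite ?(linD, linN, linZ, linMn); apply: linE.

Lemma IW1 : x + 'i *: (y - z) = x - 1 *: ('i *: (y + z)) + (2 * 'i) *: y.
Proof. by linify; ring: (@mulCii C). Qed.
Lemma IW2 : x - 'i *: (y - z) = x - (-1) *: ('i *: (y + z)) + (- (2 * 'i)) *: y.
Proof. by linify; ring: (@mulCii C). Qed.
Lemma IT1 : 'i *: (- (y *+ 2) + z *+ 2) + (2*'i) *: ('i *: x) =
   - (2 *: (x - 1 *: ('i *: (y + z)) + (2*'i) *: y)).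
Proof. by linify; ring: (@mulCii C). Qed.
Lemma IT2 : 'i *: (- (y *+ 2) + z *+ 2) + (-(2*'i)) *: ('i *: x) =
   - ((-2) *: (x - (-1) *: ('i *: (y + z)) + (-(2*'i)) *: y)).
Proof. by linify; ring: (@mulCii C). Qed.
End Lin.

Section Br.
Variables (C : comNzRingType) (A : algType C).
Implicit Types x y z : A.
Lemma brDl x y z : comm_br (x + y) z = comm_br x z + comm_br y z.
Proof. by rewrite /comm_br mulrDl mulrDr opprD addrACA. Qed.
Lemma brDr x y z : comm_br z (x + y) = comm_br z x + comm_br z y.
Proof. by rewrite /comm_br mulrDl mulrDr opprD addrACA. Qed.
Lemma brNr x y : comm_br x (- y) = - comm_br x y.
Proof. by rewrite /comm_br mulrN mulNr opprK opprB addrC. Qed.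
Lemma brZl k x y : comm_br (k *: x) y = k *: comm_br x y.
Proof. by rewrite /comm_br scalerBr scalerAl scalerAr. Qed.
Lemma brZr k x y : comm_br x (k *: y) = k *: comm_br x y.
Proof. by rewrite /comm_br -scalerAl -scalerAr scalerBr. Qed.
Lemma brC x y : comm_br x y = - comm_br y x.
Proof. by rewrite /comm_br opprB. Qed.
Lemma brxx x : comm_br x x = 0.
Proof. by rewrite /comm_br subrr. Qed.
End Br.


Theorem theorem6p3 (C : numClosedFieldType) (A : algType C) (h e te : A)
    (Hhe : comm_br h e = e *+ 2)
    (Hhte : comm_br h te = - (te *+ 2))
    (Hete : comm_br e (- te) = h)
    (l : nat) (Hl : (1 <= l)%N) :
  let y := e - te in
  let t := 'i *: (e + te) in
  let Z := h + 'i *: y in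
  let Zb := h - 'i *: y in
  (exists u : A, Z ^+ l - ht_embed h t
      (\prod_(j < l) (hvar C + ((2 * j)%:R)%:P%:P - tvar C)) = e * u) /\
  (exists u : A, Zb ^+ l - ht_embed h t
      (\prod_(j < l) (hvar C + ((2 * j)%:R)%:P%:P + tvar C)) = e * u).
Proof.
move=> y t Z Zb.
have Hw : exists w, h * e = e * w.
  exists (h + 2%:R); rewrite mulrDr mulr_natr -Hhe /comm_br.
  by rewrite addrC subrK.
have Htee : comm_br te e = h by rewrite brC -brNr.
have Hbr : forall s k : C, comm_br t (h - s *: t + k *: e) =
   'i *: (- (e *+ 2) + te *+ 2) + k *: ('i *: h).
  move=> s k; rewrite !brDr brNr brZr brxx scaler0 subr0 brZr /t !brZl !brDl brxx Htee add0r.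
  by rewrite (brC _ _ e) Hhe (brC _ _ te) Hhte opprK.
have HtW : forall s k d : C, let W := h - s *: t + k *: e in
    comm_br t W = - (d *: W) -> t * W = W * (t - d%:A).
  move=> s k d W HW; rewrite mulrBr mulr_algr.
  have -> : t * W = comm_br t W + W * t by rewrite /comm_br subrK.
  by rewrite HW addrC.
have HZ : Z = h - 1 *: t + (2 * 'i) *: e by exact: IW1.
have HZb : Zb = h - (-1) *: t + (- (2 * 'i)) *: e by exact: IW2.
have HtZ : t * Z = Z * (t - 2%:A).
  rewrite HZ; apply: HtW; rewrite Hbr; exact: IT1.
have HtZb : t * Zb = Zb * (t - (-2)%:A).
  rewrite HZb; apply: HtW; rewrite Hbr; exact: IT2.
have Hsd2 : (-1 : C) * (-2) = 2 by rewrite mulN1r opprK.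
split.
  have [u Hu] := @powW _ _ h t e Z 1 2 (2 * 'i) Hw HZ HtZ (mul1r 2) l.
  exists u; rewrite ht_embedE -Hu; congr (_ - psi _ _ _ _ _).
  by rewrite /Pr; apply: eq_bigr => j _; rewrite polyC1 mul1r.
have [u Hu] := @powW _ _ h t e Zb (-1) (-2) (- (2 * 'i)) Hw HZb HtZb Hsd2 l.
exists u; rewrite ht_embedE -Hu; congr (_ - psi _ _ _ _ _).
by rewrite /Pr; apply: eq_bigr => j _; rewrite !polyCN !polyC1 mulN1r opprK.
Qed.
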